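(* Consider the inexact value iteration $\hat P_{i+1}=\mathcal R(\hat P_i,S)+\Delta_i$, $i\in\mathbb Z_+$, with $\hat P_0\in\mathbb S^n_+$ and disturbances $\Delta_i\in\mathbb S^n$, and let $\|\Delta\|_\infty=\sup_{i\in\mathbb Z_+}\|\Delta_i\|_2$. There exist a $\mathcal{KL}$-function $\beta$ and a $\mathcal K$-function $\gamma$ such that for every disturbance sequence with $\|\Delta\|_\infty<\lambda_{\min}(S)$, every $\hat P_0\in\mathbb S^n_+$ and every $i\in\mathbb Z_+$, $$\|\hat P_i-P^*\|_2\le\beta(\|\hat P_0-P^*\|_2,i)+\gamma(\|\Delta\|_\infty).$$
   Context: Let $n,m\ge 1$, $A\in\mathbb R^{n\times n}$, $B\in\mathbb R^{n\times m}$, $S\in\mathbb S^n_{++}$, $R\in\mathbb S^m_{++}$, with $(A,B)$ stabilizable. Here $\mathbb S^n$, $\mathbb S^n_+$, $\mathbb S^n_{++}$ denote the real symmetric, symmetric positive semidefinite, and symmetric positive definite $n\times n$ matrices; $\|\cdot\|_2$ is the spectral norm; $\lambda_{\min}$ is the smallest eigenvalue. For $P\in\mathbb S^n_+$ and $S'\in\mathbb S^n$, the Riccati operator is $\mathcal R(P,S')=A^\top PA-A^\top PB(R+B^\top PB)^{-1}B^\top PA+S'$. $P^*\in\mathbb S^n_{++}$ denotes the unique positive definite solution of $P=\mathcal R(P,S)$. A function $\gamma:\mathbb R_+\to\mathbb R_+$ is of class $\mathcal K$ if it is continuous, strictly increasing and $\gamma(0)=0$. A function $\beta:\mathbb R_+\times\mathbb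 Z_+\to\mathbb R_+$ is of class $\mathcal{KL}$ if $\beta(\cdot,i)$ is of class $\mathcal K$ for each fixed $i$, and $\beta(r,i)$ decreases to $0$ as $i\to\infty$ for each fixed $r\ge 0$. *)

(* Defs.v *)
From HB Require Import structures.
From mathcomp Require Import all_boot all_order all_algebra.
From mathcomp Require Import all_classical all_reals all_analysis.
From mathcomp Require Import complex.
Set Implicit Arguments. Unset Strict Implicit. Unset Printing Implicit Defensive.
Import Order.TTheory GRing.Theory Num.Theory.
Local Open Scope ring_scope.
Local Open Scope classical_set_scope.
Import numFieldNormedType.Exports.

Section Defs.
Variable R : realType.

Definition sym_mx n (M : 'M[R]_n) : Prop := M^T = M.

Definition psd n (M : 'M[R]_n) : Prop :=
  sym_mx M /\ forall x : 'cV[R]_n, 0 <= (x^T *m M *m x) 0 0.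

Definition pd n (M : 'M[R]_n) : Prop :=
  sym_mx M /\ forall x : 'cV[R]_n, x != 0 -> 0 < (x^T *m M *m x) 0 0.

Definition vnorm n (x : 'cV[R]_n) : R := Num.sqrt (\sum_i x i 0 ^+ 2).

Definition opnorm m n (M : 'M[R]_(m, n)) : R :=
  sup [set vnorm (M *m x) | x in [set x : 'cV[R]_n | vnorm x <= 1]].

Definition lambda_min n (M : 'M[R]_n) : R := inf [set a : R | eigenvalue M a].

Definition schur_stable n (M : 'M[R]_n) : Prop :=
  forall z : R[i], eigenvalue (map_mx (real_complex R) M) z -> `|z| < 1.

Definition stabilizable n m (A : 'M[R]_n) (B : 'M[R]_(n, m)) : Prop :=
  exists K : 'M[R]_(m, n), schur_stable (A + B *m K).

Definition riccati n m (A : 'M[R]_n) (B : 'M[R]_(n, m)) (Rw : 'M[R]_m)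
  (P S' : 'M[R]_n) : 'M[R]_n :=
  A^T *m P *m A - A^T *m P *m B *m invmx (Rw + B^T *m P *m B) *m B^T *m P *m A + S'.

Definition class_K (g : R -> R) : Prop :=
  g 0 = 0 /\
  (forall r, 0 <= r -> 0 <= g r) /\
  {within `[0, +oo[%classic, continuous g} /\
  (forall r s, 0 <= r -> r < s -> g r < g s).

Definition class_KL (b : R -> nat -> R) : Prop :=
  (forall i, class_K (fun r => b r i)) /\
  (forall r, 0 <= r ->
     (forall i j, (i <= j)%N -> b r j <= b r i) /\
     (fun i => b r i) @ \oo --> 0).

Definition supnorm n (D : nat -> 'M[R]_n) : \bar R :=
  ereal_sup (range (fun i => (opnorm (D i))%:E)).

End Defs.

(* Main.v *)
Require Import Defs.
From HB Require Import structures.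
From mathcomp Require Import all_boot all_order all_algebra.
From mathcomp Require Import all_classical all_reals all_analysis.
From mathcomp Require Import complex.
From mathcomp Require Import ring lra.
Import Order.TTheory GRing.Theory Num.Theory.
Local Open Scope ring_scope.
Local Open Scope classical_set_scope.

Definition dot {R : realType} {n : nat} (x y : 'cV[R]_n) : R := (x^T *m y) 0 0.
Definition nrm2 {R : realType} {n : nat} (x : 'cV[R]_n) : R := \sum_i x i 0 ^+ 2.
Definition qf {R : realType} {n : nat} (M : 'M[R]_n) (x : 'cV[R]_n) : R :=
  (x^T *m M *m x) 0 0.

Lemma dotE {R : realType} {n : nat} (x y : 'cV[R]_n) :
  dot x y = \sum_i x i 0 * y i 0.
Proof. rewrite /dot !mxE; apply: eq_bigr => i _; by rewrite mxE. Qed.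

Lemma dotC {R : realType} {n : nat} (x y : 'cV[R]_n) : dot x y = dot y x.
Proof. rewrite !dotE; apply: eq_bigr => i _; by rewrite mulrC. Qed.

Lemma dotDl {R : realType} {n : nat} (x y z : 'cV[R]_n) :
  dot (x + y) z = dot x z + dot y z.
Proof. rewrite !dotE -big_split; apply: eq_bigr => i _; by rewrite mxE mulrDl. Qed.

Lemma dotDr {R : realType} {n : nat} (x y z : 'cV[R]_n) :
  dot z (x + y) = dot z x + dot z y.
Proof. by rewrite dotC dotDl !(dotC z). Qed.

Lemma dotZl {R : realType} {n : nat} (a : R) (x z : 'cV[R]_n) :
  dot (a *: x) z = a * dot x z.
Proof. rewrite !dotE mulr_sumr; apply: eq_bigr => i _; by rewrite mxE mulrA. Qed.

Lemma dotZr {R : realType} {n : nat} (a : R) (x z : 'cV[R]_n) :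
  dot z (a *: x) = a * dot z x.
Proof. by rewrite dotC dotZl dotC. Qed.

Lemma dotNl {R : realType} {n : nat} (x z : 'cV[R]_n) : dot (- x) z = - dot x z.
Proof. by rewrite -scaleN1r dotZl mulN1r. Qed.

Lemma dotNr {R : realType} {n : nat} (x z : 'cV[R]_n) : dot z (- x) = - dot z x.
Proof. by rewrite -scaleN1r dotZr mulN1r. Qed.

Lemma dot0l {R : realType} {n : nat} (z : 'cV[R]_n) : dot 0 z = 0.
Proof. by rewrite /dot trmx0 mul0mx mxE. Qed.

Lemma dot0r {R : realType} {n : nat} (z : 'cV[R]_n) : dot z 0 = 0.
Proof. by rewrite dotC dot0l. Qed.

Lemma dotM {R : realType} {n m : nat} (C : 'M[R]_(n, m)) (x : 'cV[R]_n) (y : 'cV[R]_m) :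
  dot x (C *m y) = dot (C^T *m x) y.
Proof. by rewrite /dot trmx_mul trmxK mulmxA. Qed.

Lemma nrm2E {R : realType} {n : nat} (x : 'cV[R]_n) : nrm2 x = dot x x.
Proof. rewrite dotE; apply: eq_bigr => i _; by rewrite expr2. Qed.

Lemma nrm2_ge0 {R : realType} {n : nat} (x : 'cV[R]_n) : 0 <= nrm2 x.
Proof. apply: sumr_ge0 => i _; exact: sqr_ge0. Qed.

Lemma nrm2_eq0 {R : realType} {n : nat} (x : 'cV[R]_n) : nrm2 x = 0 -> x = 0.
Proof.
move=> h; apply/matrixP => i j; rewrite (ord1 j) mxE.
have := psumr_eq0P (fun i _ => sqr_ge0 (x i 0)) h (i:=i) isT.
by move/eqP; rewrite sqrf_eq0 => /eqP.
Qed.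

Lemma nrm20 {R : realType} {n : nat} : nrm2 (0 : 'cV[R]_n) = 0.
Proof. by rewrite nrm2E dot0l. Qed.

Lemma nrm2_gt0 {R : realType} {n : nat} {x : 'cV[R]_n} : x != 0 -> 0 < nrm2 x.
Proof.
move=> hx; rewrite lt_def nrm2_ge0 andbT; apply/eqP => h.
by move: hx; rewrite (nrm2_eq0 _ h) eqxx.
Qed.

Lemma qfE {R : realType} {n : nat} (M : 'M[R]_n) x : qf M x = dot x (M *m x).
Proof. by rewrite /qf /dot mulmxA. Qed.

Lemma qfD {R : realType} {n : nat} (M N : 'M[R]_n) x : qf (M + N) x = qf M x + qf N x.
Proof. by rewrite !qfE mulmxDl dotDr. Qed.

Lemma qfN {R : realType} {n : nat} (M : 'M[R]_n) x : qf (- M) x = - qf M x.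
Proof. by rewrite !qfE mulNmx dotNr. Qed.

Lemma qfB {R : realType} {n : nat} (M N : 'M[R]_n) x : qf (M - N) x = qf M x - qf N x.
Proof. by rewrite qfD qfN. Qed.

Lemma qf1 {R : realType} {n : nat} (x : 'cV[R]_n) : qf 1%:M x = nrm2 x.
Proof. by rewrite qfE mul1mx nrm2E. Qed.

Lemma qf_cong {R : realType} {n m : nat} (C : 'M[R]_(m, n)) (M : 'M[R]_m) x :
  qf (C^T *m M *m C) x = qf M (C *m x).
Proof. by rewrite /qf trmx_mul !mulmxA. Qed.

Lemma qf0 {R : realType} {n : nat} (M : 'M[R]_n) : qf M 0 = 0.
Proof. by rewrite qfE mulmx0 dot0r. Qed.

Lemma dot_le_aux {R : realType} {n : nat} (x y : 'cV[R]_n) (t : R) :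
  2 * t * dot x y <= t ^+ 2 * nrm2 x + nrm2 y.
Proof.
have := nrm2_ge0 (t *: x - y).
rewrite nrm2E !dotDl !dotDr !dotNl !dotNr !dotZl !dotZr -!nrm2E (dotC y x).
move=> h; lra.
Qed.

Lemma vnorm_sq {R : realType} {n : nat} (x : 'cV[R]_n) : vnorm x ^+ 2 = nrm2 x.
Proof. by rewrite /vnorm sqr_sqrtr // nrm2_ge0. Qed.

Lemma vnorm_ge0 {R : realType} {n : nat} (x : 'cV[R]_n) : 0 <= vnorm x.
Proof. exact: sqrtr_ge0. Qed.

Lemma CS {R : realType} {n : nat} (x y : 'cV[R]_n) : dot x y <= vnorm x * vnorm y.
Proof.
have [x0|xn0] := eqVneq x 0; first by rewrite x0 dot0l mulr_ge0 // vnorm_ge0.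
have [y0|yn0] := eqVneq y 0; first by rewrite y0 dot0r mulr_ge0 // vnorm_ge0.
have ax : 0 < vnorm x by rewrite /vnorm sqrtr_gt0 nrm2_gt0.
have ay : 0 < vnorm y by rewrite /vnorm sqrtr_gt0 nrm2_gt0.
have := dot_le_aux x y (vnorm y / vnorm x).
rewrite -!vnorm_sq.
set a := vnorm x; set b := vnorm y; set d := dot x y.
have e : b / a * a = b by rewrite divfK // gt_eqF.
have up : 0 < b / a by rewrite divr_gt0.
move: e up; set u := b / a => e up h.
have h2 : u * d <= u * (a * b).
  have : 2 * u * d <= 2 * (u * a) * b by rewrite e; nra.
  nra.
by rewrite ler_pM2l in h2.
Qed.

Lemma CS_abs {R : realType} {n : nat} (x y : 'cV[R]_n) : `|dot x y| <= vnorm x * vnorm y.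
Proof.
have h1 := CS x y. have h2 := CS (- x) y.
have e : vnorm (- x) = vnorm x by change (Num.sqrt (nrm2 (-x)) = Num.sqrt (nrm2 x)); rewrite !nrm2E dotNl dotNr opprK.
rewrite e dotNl in h2. rewrite ler_norml; apply/andP; split; lra.
Qed.

Lemma sq_le_of_abs {R : realType} {d p : R} : `|d| <= p -> d ^+ 2 <= p ^+ 2.
Proof.
move=> h; have e : d ^+ 2 = `|d| ^+ 2 by rewrite -normrX ger0_norm // sqr_ge0.
have h0 : 0 <= `|d| by [].
rewrite e !expr2; nra.
Qed.

Lemma mulmx_entry {R : realType} {n m : nat} (M : 'M[R]_(m, n)) (x : 'cV[R]_n) i :
  (M *m x) i 0 = dot (row i M)^T x.
Proof. rewrite dotE mxE; apply: eq_bigr => j _; by rewrite !mxE. Qed.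

Definition Fr {R : realType} {n m : nat} (M : 'M[R]_(m, n)) : R :=
  \sum_i nrm2 (row i M)^T.

Lemma Fr_ge0 {R : realType} {n m : nat} (M : 'M[R]_(m, n)) : 0 <= Fr M.
Proof. apply: sumr_ge0 => i _; exact: nrm2_ge0. Qed.

Lemma nrm2_mul_le {R : realType} {n m : nat} (M : 'M[R]_(m, n)) (x : 'cV[R]_n) :
  nrm2 (M *m x) <= Fr M * nrm2 x.
Proof.
rewrite /Fr mulr_suml /nrm2; apply: ler_sum => i _.
rewrite mulmx_entry.
have := sq_le_of_abs (CS_abs (row i M)^T x).
by rewrite exprMn !vnorm_sq.
Qed.

Lemma nrm2Z {R : realType} {n : nat} (c : R) (x : 'cV[R]_n) : nrm2 (c *: x) = c ^+ 2 * nrm2 x.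
Proof. by rewrite !nrm2E dotZl dotZr mulrA expr2. Qed.

Lemma vnormZ {R : realType} {n : nat} (c : R) (x : 'cV[R]_n) : vnorm (c *: x) = `|c| * vnorm x.
Proof.
change (Num.sqrt (nrm2 (c *: x)) = `|c| * Num.sqrt (nrm2 x)).
by rewrite nrm2Z sqrtrM ?sqr_ge0 // sqrtr_sqr.
Qed.

Lemma vnorm0 {R : realType} {n : nat} : vnorm (0 : 'cV[R]_n) = 0.
Proof. by change (Num.sqrt (nrm2 (0 : 'cV[R]_n)) = 0); rewrite nrm20 sqrtr0. Qed.

Lemma vnorm_gt0 {R : realType} {n : nat} {x : 'cV[R]_n} : x != 0 -> 0 < vnorm x.
Proof. by move=> h; rewrite /vnorm sqrtr_gt0 nrm2_gt0. Qed.

Lemma opset_has_sup {R : realType} {n m : nat} (M : 'M[R]_(m, n)) :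
  has_sup [set vnorm (M *m x) | x in [set x : 'cV[R]_n | vnorm x <= 1]].
Proof.
split; first by exists (vnorm (M *m 0)), 0 => //=; rewrite vnorm0.
exists (Num.sqrt (Fr M)) => _ [x /= hx <-].
change (Num.sqrt (nrm2 (M *m x)) <= Num.sqrt (Fr M)).
rewrite ler_sqrt ?Fr_ge0 //.
apply: (le_trans (nrm2_mul_le M x)).
have h1 : nrm2 x <= 1.
  rewrite -vnorm_sq -(expr1n R 2); apply: sq_le_of_abs.
  by rewrite ger0_norm // vnorm_ge0.
have := Fr_ge0 M; have := nrm2_ge0 x; nra.
Qed.

Lemma opnorm_ge0 {R : realType} {n m : nat} (M : 'M[R]_(m, n)) : 0 <= opnorm M.
Proof.
have h : vnorm (M *m 0) <= opnorm M.
  apply: sup_upper_bound; first exact: opset_has_sup.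
  by exists 0 => //=; rewrite vnorm0 ler01.
by rewrite mulmx0 vnorm0 in h.
Qed.

Lemma opnorm_bound {R : realType} {n m : nat} (M : 'M[R]_(m, n)) (x : 'cV[R]_n) :
  vnorm (M *m x) <= opnorm M * vnorm x.
Proof.
have [x0|xn0] := eqVneq x 0.
  by rewrite x0 mulmx0 !vnorm0 mulr0 lexx.
have ax := vnorm_gt0 xn0.
set y := (vnorm x)^-1 *: x.
have hy : vnorm y = 1 by rewrite vnormZ ger0_norm ?invr_ge0 ?vnorm_ge0 // mulVf // gt_eqF.
have : vnorm (M *m y) <= opnorm M.
  apply: sup_upper_bound; first exact: opset_has_sup.
  by exists y => //=; rewrite hy.
rewrite /y -scalemxAr vnormZ ger0_norm ?invr_ge0 ?vnorm_ge0 //.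
by rewrite mulrC ler_pdivrMr.
Qed.

Lemma qf_opnorm {R : realType} {n : nat} (M : 'M[R]_n) (x : 'cV[R]_n) :
  `|qf M x| <= opnorm M * nrm2 x.
Proof.
rewrite qfE; apply: le_trans (CS_abs _ _) _.
have h := opnorm_bound M x; have := vnorm_ge0 x; rewrite -vnorm_sq; nra.
Qed.

Lemma opnorm_le {R : realType} {n : nat} (E : 'M[R]_n) (c : R) :
  E^T = E -> 0 <= c -> (forall x, `|qf E x| <= c * nrm2 x) -> opnorm E <= c.
Proof.
move=> sE c0 h; rewrite /opnorm; apply: ge_sup.
  by exists (vnorm (E *m 0)), 0 => //=; rewrite vnorm0.
move=> _ [x /= hx <-].
set a := nrm2 (E *m x).
have key : forall t, 0 < t -> 2 * t * a <= c * (nrm2 x + t ^+ 2 * a).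
  move=> t t0; set y := t *: (E *m x).
  have h1 := h (x + y); have h2 := h (x - y).
  have e : qf E (x + y) - qf E (x - y) = 4 * t * a.
    rewrite !qfE !mulmxDr !mulmxN !dotDl !dotDr !dotNl !dotNr.
    have e1 : dot y (E *m x) = t * a by rewrite /y dotZl /a nrm2E.
    have e2 : dot x (E *m y) = t * a.
      by rewrite dotM sE dotC e1.
    rewrite e1 e2; ring.
  have n1 : nrm2 (x + y) + nrm2 (x - y) = 2 * (nrm2 x + t ^+ 2 * a).
    rewrite !nrm2E !dotDl !dotDr !dotNl !dotNr -!nrm2E /y nrm2Z /a; ring.
  have := ler_norml (qf E (x + y)) (c * nrm2 (x + y)); rewrite h1 => /esym/andP[_ _].
  move: h1 h2; rewrite !ler_norml => /andP[h1a h1b] /andP[h2a h2b].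
  nra.
have a0 : 0 <= a by exact: nrm2_ge0.
have hx2 : nrm2 x <= 1.
  rewrite -vnorm_sq -(expr1n R 2); apply: sq_le_of_abs.
  by rewrite ger0_norm // vnorm_ge0.
have ac : a <= c ^+ 2.
  have [c00|cp] := eqVneq c 0.
    have := key 1 ltr01; rewrite c00; nra.
  have cpos : 0 < c by rewrite lt_def cp c0.
  have := key c^-1; rewrite invr_gt0 => /(_ cpos) h1.
  have e : c * c^-1 = 1 by rewrite mulfV.
  have h2 := ler_wpM2l c0 h1.
  have e1 : c * (2 * c^-1 * a) = 2 * (c * c^-1) * a by ring.
  have e2 : c * (c * (nrm2 x + c^-1 ^+ 2 * a)) = c ^+ 2 * nrm2 x + (c * c^-1) ^+ 2 * a by ring.
  rewrite e1 e2 e in h2.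
  have := nrm2_ge0 x; nra.
change (Num.sqrt a <= c).
by rewrite -(ger0_norm c0) -sqrtr_sqr ler_sqrt ?sqr_ge0.
Qed.

Lemma qfZ {R : realType} {n : nat} (a : R) (M : 'M[R]_n) x : qf (a *: M) x = a * qf M x.
Proof. by rewrite !qfE -scalemxAl dotZr. Qed.

Lemma qf_scalar {R : realType} {n : nat} (a : R) (x : 'cV[R]_n) : qf a%:M x = a * nrm2 x.
Proof. by rewrite -scalemx1 qfZ qf1. Qed.

Lemma qf_tr_row {R : realType} {n : nat} (M : 'M[R]_n) (v : 'rV[R]_n) :
  qf M v^T = (v *m M *m v^T) 0 0.
Proof. by rewrite /qf trmxK. Qed.

Lemma eig0_kernel {R : realType} {n : nat} (M : 'M[R]_n) :
  M \notin unitmx -> exists2 v : 'rV[R]_n, v *m M = 0 & v != 0.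
Proof.
move=> hM.
have : eigenvalue M 0.
  rewrite /eigenvalue /eigenspace -scalemx1 scale0r subr0 kermx_eq0 row_free_unit.
  exact: hM.
case/eigenvalueP => v hv vn0; exists v => //; by rewrite hv scale0r.
Qed.

Lemma pos_unit {R : realType} {n : nat} (M : 'M[R]_n) :
  (forall v, v != 0 -> 0 < qf M v) -> M \in unitmx.
Proof.
move=> h; apply/negPn/negP => /eig0_kernel [v hv vn0].
have := h v^T; rewrite trmx_eq0 => /(_ vn0).
by rewrite qf_tr_row hv mul0mx mxE ltxx.
Qed.

Lemma psd_unit_coercive {R : realType} {n : nat} (M : 'M[R]_n) :
  M^T = M -> (forall x, 0 <= qf M x) -> M \in unitmx ->
  exists c, 0 < c /\ forall x, c * nrm2 x <= qf M x.
Proof.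
move=> sM pM uM.
set L := opnorm M; set Li := opnorm (invmx M).
have L0 : 0 <= L by exact: opnorm_ge0.
have Li0 : 0 <= Li by exact: opnorm_ge0.
set t := (L + 1)^-1.
have t0 : 0 < t by rewrite invr_gt0; lra.
have ht : t * (L + 1) = 1 by rewrite mulVf //; apply/eqP; lra.
set K := Li ^+ 2 * (L + 1).
have K0 : 0 <= K by rewrite /K mulr_ge0 ?sqr_ge0 //; lra.
exists (K + 1)^-1; split; first by rewrite invr_gt0; lra.
move=> x.
set a := nrm2 (M *m x).
have a0 : 0 <= a by exact: nrm2_ge0.
have q0 := pM x.
have h1 : t * a <= qf M x.
  set y := (- t) *: (M *m x).
  have hp := pM (x + y).
  have e1 : dot y (M *m x) = - t * a by rewrite /y dotZl /a nrm2E.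
  have e2 : dot x (M *m y) = - t * a by rewrite dotM sM dotC e1.
  have e3 : qf M y = t ^+ 2 * qf M (M *m x) by rewrite /y qfE -scalemxAr dotZl dotZr -qfE; ring.
  have h3 : qf M (M *m x) <= L * a.
    by have := qf_opnorm M (M *m x); rewrite ler_norml => /andP[_ ->].
  have : qf M (x + y) = qf M x + dot x (M *m y) + dot y (M *m x) + qf M y.
    by rewrite !qfE mulmxDr !dotDl !dotDr; ring.
  rewrite e1 e2 e3 => e4; rewrite e4 in hp.
  have htL : t * L <= 1 by lra.
  have : t ^+ 2 * qf M (M *m x) <= t * a.
    have : t ^+ 2 * qf M (M *m x) <= t ^+ 2 * (L * a) by rewrite ler_wpM2l ?sqr_ge0.
    have : t ^+ 2 * (L * a) <= t * a.
      rewrite expr2 -mulrA; apply: ler_wpM2l; first lra.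
      rewrite mulrA; have := ler_wpM2r a0 htL; by rewrite mul1r.
    lra.
  nra.
have h2 : nrm2 x <= Li ^+ 2 * a.
  have e : x = invmx M *m (M *m x) by rewrite mulmxA mulVmx // mul1mx.
  have hb : vnorm x <= Li * vnorm (M *m x) by rewrite {1}e; exact: opnorm_bound.
  rewrite -vnorm_sq /a -vnorm_sq -exprMn.
  apply: sq_le_of_abs; rewrite ger0_norm //; exact: vnorm_ge0.
have h3 : a <= (L + 1) * qf M x.
  have := ler_wpM2l (ltW (ltr_wpDl L0 ltr01 : 0 < L + 1)) h1.
  by rewrite mulrA [(L + 1) * t]mulrC ht mul1r.
have h4 : nrm2 x <= K * qf M x.
  apply: le_trans h2 _; rewrite /K -mulrA ler_wpM2l ?sqr_ge0 //.
have hK : 0 < K + 1 by lra.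
rewrite ler_pdivrMl //.
have := nrm2_ge0 x; nra.
Qed.

Lemma exists_nonzero {R : realType} {n : nat} : (0 < n)%N -> exists x : 'cV[R]_n, x != 0.
Proof.
move=> n0; exists (const_mx 1); apply/eqP => h.
have := congr1 (fun M : 'cV[R]_n => M (Ordinal n0) 0) h; rewrite !mxE => /eqP.
by rewrite oner_eq0.
Qed.

Lemma lambda_min_spec {R : realType} {n : nat} (S : 'M[R]_n) : (0 < n)%N -> pd S ->
  0 < lambda_min S /\ forall x, lambda_min S * nrm2 x <= qf S x.
Proof.
move=> n0 [sS pS].
set U := [set qf S x / nrm2 x | x in [set x : 'cV[R]_n | x != 0]].
have Une : U !=set0.
  have [x xn0] := exists_nonzero (R := R) n0.
  by exists (qf S x / nrm2 x), x.
have Ulb : has_lbound U.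
  exists (- opnorm S) => _ [x /= xn0 <-].
  have hx := nrm2_gt0 xn0.
  rewrite ler_pdivlMr //.
  have := qf_opnorm S x; rewrite ler_norml => /andP[h _]; lra.
set mu := inf U.
have h1 : forall x, mu * nrm2 x <= qf S x.
  move=> x; have [->|xn0] := eqVneq x 0; first by rewrite nrm20 qf0 mulr0.
  have hx := nrm2_gt0 xn0.
  have : mu <= qf S x / nrm2 x by apply: ge_inf => //; exists x.
  by rewrite ler_pdivlMr.
have h2 : eigenvalue S mu.
  apply: contraT => hne.
  have uM : (S - mu%:M) \in unitmx.
    by rewrite -row_free_unit -kermx_eq0; move: hne; rewrite /eigenvalue /eigenspace negbK.
  have sM : (S - mu%:M)^T = S - mu%:M by rewrite linearB /= tr_scalar_mx sS.
  have pM : forall x, 0 <= qf (S - mu%:M) x.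
    by move=> x; rewrite qfB qf_scalar subr_ge0 h1.
  have [c [c0 hc]] := psd_unit_coercive _ sM pM uM.
  have : mu + c <= mu.
    apply: lb_le_inf => // _ [x /= xn0 <-].
    have hx := nrm2_gt0 xn0.
    rewrite ler_pdivlMr //.
    have := hc x; rewrite qfB qf_scalar; lra.
  lra.
have h3 : forall a, eigenvalue S a -> mu <= a.
  move=> a /eigenvalueP [v hv vn0].
  have xn0 : v^T != 0 by rewrite trmx_eq0.
  have hx := nrm2_gt0 xn0.
  have e : qf S v^T = a * nrm2 v^T.
    rewrite qfE.
    have -> : S *m v^T = a *: v^T by rewrite -{1}sS -trmx_mul hv linearZ.
    by rewrite dotZr nrm2E.
  have := h1 v^T; rewrite e; by rewrite ler_pM2r.
have hl : lambda_min S = mu.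
  apply/eqP; rewrite eq_le; apply/andP; split.
    apply: ge_inf; last exact: h2.
    by exists mu => a ha; apply: h3.
  apply: lb_le_inf; first by exists mu.
  by move=> a ha; apply: h3.
rewrite hl; split; last exact: h1.
case/eigenvalueP: h2 => v hv vn0.
have xn0 : v^T != 0 by rewrite trmx_eq0.
have hx := nrm2_gt0 xn0.
have := pS _ xn0; rewrite -/(qf S v^T) qfE.
have -> : S *m v^T = mu *: v^T by rewrite -{1}sS -trmx_mul hv linearZ.
rewrite dotZr -nrm2E => h.
by rewrite -(pmulr_lgt0 _ hx).
Qed.

Lemma dot_sym {R : realType} {n : nat} (M : 'M[R]_n) x y :
  M^T = M -> dot x (M *m y) = dot (M *m x) y.
Proof. by move=> sM; rewrite dotM sM. Qed.

Definition Mm {R : realType} {n m : nat} (B : 'M[R]_(n, m)) (Rw : 'M[R]_m) (P : 'M[R]_n) :=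
  Rw + B^T *m P *m B.

Lemma qf_Mm {R : realType} {n m : nat} (B : 'M[R]_(n, m)) (Rw : 'M[R]_m) (P : 'M[R]_n) v :
  qf (Mm B Rw P) v = qf Rw v + qf P (B *m v).
Proof. by rewrite /Mm qfD qf_cong. Qed.

Lemma Mm_sym {R : realType} {n m : nat} (B : 'M[R]_(n, m)) (Rw : 'M[R]_m) (P : 'M[R]_n) :
  P^T = P -> Rw^T = Rw -> (Mm B Rw P)^T = Mm B Rw P.
Proof.
move=> sP sR; rewrite /Mm linearD /= sR !trmx_mul trmxK sP; by rewrite mulmxA.
Qed.

Lemma ric_identity {R : realType} {n m : nat} (A : 'M[R]_n) (B : 'M[R]_(n, m))
  (Rw : 'M[R]_m) (P S' : 'M[R]_n) (K : 'M[R]_(m, n)) x :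
  P^T = P -> Rw^T = Rw -> Mm B Rw P \in unitmx ->
  qf (riccati A B Rw P S') x +
    qf (Mm B Rw P) (K *m x + invmx (Mm B Rw P) *m (B^T *m P *m A *m x)) =
  qf P ((A + B *m K) *m x) + qf Rw (K *m x) + qf S' x.
Proof.
move=> sP sR uM.
set M := Mm B Rw P.
have sM : M^T = M by exact: Mm_sym.
set z := A *m x; set u := K *m x; set g := B^T *m (P *m z).
set w := invmx M *m g.
have eg : B^T *m P *m A *m x = g by rewrite /g /z !mulmxA.
rewrite eg -/w.
have eMw : M *m w = g by rewrite /w mulmxA mulmxV // mul1mx.
rewrite /riccati -/(Mm B Rw P) -/M qfD qfB qf_cong -/z.
have eY : qf (A^T *m P *m B *m invmx M *m B^T *m P *m A) x = dot g w.
  by rewrite qfE -!mulmxA dotM trmxK -/z dot_sym // dotM -/g.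
rewrite eY.
have eQ : qf M (u + w) = qf Rw u + qf P (B *m u) + 2 * dot u g + dot g w.
  rewrite qfE mulmxDr !dotDl !dotDr eMw -qfE qf_Mm.
  rewrite (dot_sym M w u sM) eMw (dotC w g) (dotC g u); ring.
rewrite eQ.
have eL : (A + B *m K) *m x = z + B *m u by rewrite mulmxDl -mulmxA.
rewrite eL.
have eP : qf P (z + B *m u) = qf P z + 2 * dot u g + qf P (B *m u).
  rewrite !qfE mulmxDr !dotDl !dotDr.
  have e1 : dot z (P *m (B *m u)) = dot u g by rewrite dot_sym // dotM dotC.
  have e2 : dot (B *m u) (P *m z) = dot u g by rewrite dotC dotM dotC.
  rewrite e1 e2; ring.
rewrite eP; ring.
Qed.

Lemma Mm_unit {R : realType} {n m : nat} (B : 'M[R]_(n, m)) (Rw : 'M[R]_m) (P : 'M[R]_n) :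
  pd Rw -> (forall v, 0 <= qf P v) -> Mm B Rw P \in unitmx.
Proof.
move=> [_ pR] pP; apply: pos_unit => v vn0.
rewrite qf_Mm; have := pR v vn0; have := pP (B *m v); rewrite /qf; lra.
Qed.

Lemma pd_qf_ge0 {R : realType} {n : nat} (M : 'M[R]_n) : pd M -> forall x, 0 <= qf M x.
Proof.
move=> [_ pM] x; have [->|xn0] := eqVneq x 0; first by rewrite qf0.
exact: ltW (pM x xn0).
Qed.

Lemma ric_le {R : realType} {n m : nat} (A : 'M[R]_n) (B : 'M[R]_(n, m))
  (Rw : 'M[R]_m) (P S' : 'M[R]_n) (K : 'M[R]_(m, n)) x :
  P^T = P -> pd Rw -> (forall v, 0 <= qf P v) ->
  qf (riccati A B Rw P S') x <= qf P ((A + B *m K) *m x) + qf Rw (K *m x) + qf S' x.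
Proof.
move=> sP pR pP.
have uM := Mm_unit B Rw P pR pP.
rewrite -(ric_identity A B Rw P S' K x sP (proj1 pR) uM).
rewrite lerDl qf_Mm; have := pd_qf_ge0 _ pR; have := pP; move=> h1 h2.
by rewrite addr_ge0.
Qed.

Definition Kopt {R : realType} {n m : nat} (A : 'M[R]_n) (B : 'M[R]_(n, m))
  (Rw : 'M[R]_m) (P : 'M[R]_n) : 'M[R]_(m, n) :=
  - (invmx (Mm B Rw P) *m (B^T *m P *m A)).

Lemma ric_eq {R : realType} {n m : nat} (A : 'M[R]_n) (B : 'M[R]_(n, m))
  (Rw : 'M[R]_m) (P S' : 'M[R]_n) x :
  P^T = P -> pd Rw -> (forall v, 0 <= qf P v) ->
  qf (riccati A B Rw P S') x =
   qf P ((A + B *m Kopt A B Rw P) *m x) + qf Rw (Kopt A B Rw P *m x) + qf S' x.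
Proof.
move=> sP pR pP.
have uM := Mm_unit B Rw P pR pP.
rewrite -(ric_identity A B Rw P S' (Kopt A B Rw P) x sP (proj1 pR) uM).
by rewrite /Kopt mulNmx -!mulmxA addNr qf0 addr0.
Qed.

Lemma ric_sym {R : realType} {n m : nat} (A : 'M[R]_n) (B : 'M[R]_(n, m))
  (Rw : 'M[R]_m) (P S' : 'M[R]_n) :
  P^T = P -> Rw^T = Rw -> S'^T = S' -> (riccati A B Rw P S')^T = riccati A B Rw P S'.
Proof.
move=> sP sR sS.
have sM := Mm_sym B Rw P sP sR.
rewrite /riccati !linearD !linearN /= sS !trmx_mul !trmxK sP trmx_inv.
rewrite -/(Mm B Rw P) sM /Mm !mulmxA.
done.
Qed.

Import numFieldNormedType.Exports.

Lemma upper_step {R : realType} {n m : nat} (A : 'M[R]_n) (B : 'M[R]_(n, m))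
  (Rw : 'M[R]_m) (S Ps P : 'M[R]_n) (t : R) :
  Ps^T = Ps -> pd Rw -> (forall v, 0 <= qf Ps v) ->
  (forall x, qf Ps x = qf (riccati A B Rw Ps S) x) ->
  P^T = P -> (forall v, 0 <= qf P v) -> 1 <= t -> (forall x, qf P x <= t * qf Ps x) ->
  forall x, qf (riccati A B Rw P S) x <= t * qf Ps x - (t - 1) * qf S x.
Proof.
move=> sPs pR pPs hfix sP pP t1 hP x.
set K := Kopt A B Rw Ps.
have e := ric_eq A B Rw Ps S x sPs pR pPs.
rewrite -hfix -/K in e.
have h := ric_le A B Rw P S K x sP pR pP.
have h1 := hP ((A + B *m K) *m x).
have h2 := pd_qf_ge0 _ pR (K *m x).
have h3 : 0 <= (t - 1) * qf Rw (K *m x) by rewrite mulr_ge0 // subr_ge0.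
nra.
Qed.

Lemma lower_step {R : realType} {n m : nat} (A : 'M[R]_n) (B : 'M[R]_(n, m))
  (Rw : 'M[R]_m) (S Ps P : 'M[R]_n) (s : R) :
  Ps^T = Ps -> pd Rw -> (forall v, 0 <= qf Ps v) ->
  (forall x, qf Ps x = qf (riccati A B Rw Ps S) x) ->
  P^T = P -> 0 <= s -> s <= 1 -> (forall x, s * qf Ps x <= qf P x) ->
  forall x, s * qf Ps x + (1 - s) * qf S x <= qf (riccati A B Rw P S) x.
Proof.
move=> sPs pR pPs hfix sP s0 s1 hP x.
have pP : forall v, 0 <= qf P v.
  by move=> v; apply: le_trans (hP v); rewrite mulr_ge0.
set K := Kopt A B Rw P.
have e := ric_eq A B Rw P S x sP pR pP.
rewrite -/K in e.
have h := ric_le A B Rw Ps S K x sPs pR pPs.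
rewrite -hfix in h.
have h1 := hP ((A + B *m K) *m x).
have h2 := pd_qf_ge0 _ pR (K *m x).
have h3 : 0 <= (1 - s) * qf Rw (K *m x) by rewrite mulr_ge0 // subr_ge0.
have h4 : 0 <= s * (qf Ps ((A + B *m K) *m x) + qf Rw (K *m x) + qf S x - qf Ps x).
  by rewrite mulr_ge0 // subr_ge0.
nra.
Qed.

Lemma lin_classK {R : realType} (c : R) : 0 < c -> class_K (fun r => c * r).
Proof.
move=> c0; split; first by rewrite mulr0.
split; first by move=> r r0; rewrite mulr_ge0 // ltW.
split; first by apply: continuous_subspaceT; exact: mulrl_continuous.
by move=> r s _ rs; rewrite ltr_pM2l.
Qed.

Lemma geom_classKL {R : realType} (c q : R) : 0 < c -> 0 < q -> q < 1 ->
  class_KL (fun r k => c * q ^+ k * r).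
Proof.
move=> c0 q0 q1; split.
  move=> i; apply: lin_classK; by rewrite mulr_gt0 // exprn_gt0.
move=> r r0; split.
  move=> i j ij; apply: ler_wpM2r => //; apply: ler_wpM2l; first exact: ltW.
  exact: (ler_wiXn2l (ltW q0) (ltW q1) ij).
have hq : (fun k => q ^+ k) @ \oo --> 0 by apply: cvg_expr; rewrite gtr0_norm.
have h2 : (fun k => c * q ^+ k * r) @ \oo --> c * 0 * r.
  apply: cvgMl; apply: cvgMr; exact: hq.
by rewrite mulr0 mul0r in h2.
Qed.

Theorem theorem3 (R : realType) (n m : nat)
  (A : 'M[R]_n) (B : 'M[R]_(n, m)) (S : 'M[R]_n) (Rw : 'M[R]_m)
  (Pstar : 'M[R]_n) :
  (0 < n)%N -> (0 < m)%N ->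
  pd S -> pd Rw -> stabilizable A B ->
  pd Pstar -> Pstar = riccati A B Rw Pstar S ->
  (forall P : 'M[R]_n, pd P -> P = riccati A B Rw P S -> P = Pstar) ->
  exists (beta : R -> nat -> R) (gamma : R -> R),
    class_KL beta /\ class_K gamma /\
    forall (Delta : nat -> 'M[R]_n) (Phat : nat -> 'M[R]_n),
      (forall i, sym_mx (Delta i)) ->
      (supnorm Delta < (lambda_min S)%:E)%E ->
      psd (Phat 0%N) ->
      (forall i, Phat i.+1 = riccati A B Rw (Phat i) S + Delta i) ->
      forall i : nat,
        opnorm (Phat i - Pstar) <=
          beta (opnorm (Phat 0%N - Pstar)) i + gamma (fine (supnorm Delta)).
Proof.
move=> n0 m0 pS pR _ pPs hfix _.
have [sig0 hsig] := lambda_min_spec S n0 pS.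
set sig := lambda_min S in sig0 hsig *.
have sS : S^T = S := proj1 pS.
have sPs : Pstar^T = Pstar := proj1 pPs.
have pPs0 := pd_qf_ge0 _ pPs.
have fixq : forall x, qf Pstar x = qf (riccati A B Rw Pstar S) x.
  by move=> x; rewrite -hfix.
have PsS : forall x, qf S x <= qf Pstar x.
  move=> x; have := ric_eq A B Rw Pstar S x sPs pR pPs0.
  rewrite -fixq => ->.
  have := pPs0 ((A + B *m Kopt A B Rw Pstar) *m x).
  have := pd_qf_ge0 _ pR (Kopt A B Rw Pstar *m x); lra.
set C := Num.max (opnorm Pstar) sig.
have Csig : sig <= C by rewrite le_max lexx orbT.
have CPs : opnorm Pstar <= C by rewrite le_max lexx.
have C0 : 0 < C by lra.
have hC : forall x, qf Pstar x <= C * nrm2 x.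
  move=> x; have := qf_opnorm Pstar x; rewrite ler_norml => /andP[_ h].
  apply: le_trans h _; apply: ler_wpM2r => //; exact: nrm2_ge0.
set eps := sig / C.
have eC : eps * C = sig by rewrite /eps divfK // gt_eqF.
have eps0 : 0 < eps by rewrite divr_gt0.
have eps1 : eps <= 1 by rewrite ler_pdivrMr // mul1r.
have hSeps : forall x, eps * qf Pstar x <= qf S x.
  move=> x; have := hC x; have := hsig x; have := nrm2_ge0 x; nra.
set rho := 1 - eps.
set rho' := (1 + rho) / 2.
set K1 := C / sig.
have K10 : 0 < K1 by rewrite divr_gt0.
have rho'0 : 0 < rho' by rewrite /rho' /rho; lra.
have rho'1 : rho' < 1 by rewrite /rho' /rho; lra.
exists (fun r k => K1 * rho' ^+ k * r), (fun d => K1 * d).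
split; first exact: geom_classKL.
split; first exact: lin_classK.
move=> Delta Phat sD hsup [sP0 pP0] hrec k.
have hlb : forall i, ((opnorm (Delta i))%:E <= supnorm Delta)%E.
  by move=> i; apply: ereal_sup_ubound; exists i.
have [d hd] : exists d : R, supnorm Delta = d%:E.
  move: (hlb 0%N) hsup; case: (supnorm Delta) => [r| |] //; by exists r.
rewrite hd /=.
have hDi : forall i, opnorm (Delta i) <= d by move=> i; have := hlb i; rewrite hd lee_fin.
have d0 : 0 <= d by apply: le_trans (hDi 0%N); exact: opnorm_ge0.
have dsig : d < sig by move: hsup; rewrite hd lte_fin.
have hDq : forall i x, `|qf (Delta i) x| <= d * nrm2 x.
  move=> i x; apply: le_trans (qf_opnorm _ _) _; apply: ler_wpM2r => //; exact: nrm2_ge0.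
set eta := d / sig.
have eS : eta * sig = d by rewrite /eta divfK // gt_eqF.
have eta0 : 0 <= eta by rewrite divr_ge0 // ltW.
have eta1 : eta < 1 by rewrite ltr_pdivrMr // mul1r.
have hDS : forall i x, `|qf (Delta i) x| <= eta * qf S x.
  move=> i x; apply: le_trans (hDq i x) _.
  have := hsig x; have := nrm2_ge0 x; nra.
set r := opnorm (Phat 0%N - Pstar).
have r0 : 0 <= r by exact: opnorm_ge0.
set u := r / sig.
have eu : u * sig = r by rewrite /u divfK // gt_eqF.
have u0 : 0 <= u by rewrite divr_ge0 // ltW.
have h0 : forall x, `|qf (Phat 0%N) x - qf Pstar x| <= u * qf Pstar x.
  move=> x; rewrite -qfB; apply: le_trans (qf_opnorm _ _) _.
  rewrite -/r -eu.
  have := hsig x; have := PsS x; have := nrm2_ge0 x; nra.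
set a0 := if eta + u <= 1 then eta + u else 1.
have a0e : eta <= a0 by rewrite /a0; case: ifP => _; lra.
have a01 : a0 <= 1 by rewrite /a0; case: ifP => h //; lra.
have a0u : a0 - eta <= u by rewrite /a0; case: ifP => h; lra.
have ha0 : forall x, (1 - a0) * qf Pstar x <= qf (Phat 0%N) x.
  move=> x; have := h0 x; rewrite ler_norml => /andP[h1 _].
  have := pPs0 x; have := pP0 x; rewrite -/(qf _ x).
  rewrite /a0; case: ifP => _ ? ?; nra.
set a := fun j : nat => rho ^+ j * (a0 - eta) + eta.
set b := fun j : nat => rho ^+ j * u + eta.
have rho0 : 0 <= rho by rewrite /rho; lra.
have rho1 : rho <= 1 by rewrite /rho; lra.
have rj0 : forall j, 0 <= rho ^+ j by move=> j; exact: exprn_ge0.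
have rj1 : forall j, rho ^+ j <= 1 by move=> j; exact: exprn_ile1.
have ae : forall j, eta <= a j.
  move=> j; rewrite /a; have := rj0 j; nra.
have a1 : forall j, a j <= 1.
  move=> j; rewrite /a; have := rj1 j; have := rj0 j; nra.
have be : forall j, eta <= b j.
  move=> j; rewrite /b; have := rj0 j; nra.
have arec : forall j, a j.+1 = rho * a j + eta * eps.
  move=> j; rewrite /a exprS /rho; ring.
have brec : forall j, b j.+1 = rho * b j + eta * eps.
  move=> j; rewrite /b exprS /rho; ring.
have inv : forall j, (Phat j)^T = Phat j /\
    (forall x, (1 - a j) * qf Pstar x <= qf (Phat j) x) /\
    (forall x, qf (Phat j) x <= (1 + b j) * qf Pstar x).
  elim=> [|j [sPj [lo hi]]].
    split; first exact: sP0.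
    split; first by move=> x; rewrite /a expr0 mul1r; have := ha0 x; lra.
    move=> x; have := h0 x; rewrite ler_norml => /andP[_ h1].
    rewrite /b expr0 mul1r; have := pPs0 x; nra.
  have sric := ric_sym A B Rw (Phat j) S sPj (proj1 pR) sS.
  have pPj : forall v, 0 <= qf (Phat j) v.
    move=> v; apply: le_trans (lo v); rewrite mulr_ge0 //; have := a1 j; lra.
  have hup := upper_step A B Rw S Pstar (Phat j) (1 + b j) sPs pR pPs0 fixq sPj pPj.
  have hlo := lower_step A B Rw S Pstar (Phat j) (1 - a j) sPs pR pPs0 fixq sPj.
  rewrite hrec; split; first by rewrite linearD /= sric (sD j).
  split => x; rewrite qfD; have := hDS j x; rewrite ler_norml => /andP[hd1 hd2];
    have hSe := hSeps x; have hp := pPs0 x.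
    rewrite arec.
    have s0 : 0 <= 1 - a j by have := a1 j; lra.
    have s1 : 1 - a j <= 1 by have := ae j; lra.
    have hl := hlo s0 s1 lo x.
    have : 0 <= (a j - eta) * (qf S x - eps * qf Pstar x).
      by rewrite mulr_ge0 // subr_ge0 ?ae ?hSe.
    rewrite /rho; nra.
  rewrite brec.
  have hbe := be j.
  have t1 : 1 <= 1 + b j by lra.
  have hu := hup t1 hi x.
  have : 0 <= (b j - eta) * (qf S x - eps * qf Pstar x).
    by rewrite mulr_ge0 // subr_ge0 ?hSe.
  rewrite /rho; nra.
have [sPk [lo hi]] := inv k.
have sE : (Phat k - Pstar)^T = Phat k - Pstar by rewrite linearB /= sPk sPs.
have rr : rho ^+ k <= rho' ^+ k.
  apply: lerXn2r; [rewrite nnegrE; exact: rho0 | rewrite nnegrE; exact: ltW rho'0 | rewrite /rho'; lra].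
have cge : 0 <= (rho' ^+ k * u + eta) * C.
  have : 0 <= rho' ^+ k by exact: exprn_ge0 (ltW rho'0).
  move=> h; apply: mulr_ge0; last exact: ltW. apply: addr_ge0 => //; exact: mulr_ge0.
have -> : K1 * rho' ^+ k * r + K1 * d = (rho' ^+ k * u + eta) * C.
  by rewrite /K1 /u /eta; ring.
apply: opnorm_le => // x.
rewrite qfB ler_norml.
have := lo x; have := hi x; have := hC x; have := pPs0 x; have := a1 k; have := ae k.
have ha : a k <= rho ^+ k * u + eta.
  by rewrite /a; have := rj0 k; nra.
have hb : b k <= rho' ^+ k * u + eta by rewrite /b; nra.
have hrk := rj0 k.
move=> h1 h2 h3 h4 h5 h6.
have := nrm2_ge0 x => h7.
have h8 : (rho' ^+ k * u + eta) * qf Pstar x <= (rho' ^+ k * u + eta) * C * nrm2 x.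
  rewrite -mulrA; apply: ler_wpM2l; last exact: hC.
  have : 0 <= rho' ^+ k by exact: exprn_ge0 (ltW rho'0).
  move=> h; apply: addr_ge0 => //; exact: mulr_ge0.
have hru : rho ^+ k * u <= rho' ^+ k * u by apply: ler_wpM2r.
have p1 : 0 <= (rho' ^+ k * u + eta - a k) * qf Pstar x.
  by apply: mulr_ge0 => //; lra.
have p2 : 0 <= (rho' ^+ k * u + eta - b k) * qf Pstar x.
  by apply: mulr_ge0 => //; lra.
apply/andP; split; nra.
Qed.
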